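(* Let $n\ge 3$. Then $\mathit{DCD}(n)$ is isomorphic to an incidence sum $\mathcal C_1\oplus_I\mathcal C_2$ such that: (1) $\mathcal C_1$ is a configuration of type $\left(\binom{2n-2}{n-2}_n,\ \binom{2n-2}{n-1}_{n-1}\right)$; (2) $\mathcal C_2$ is a configuration of type $\left(\binom{2n-2}{n-1}_{n-1},\ \binom{2n-2}{n-2}_n\right)$; (3) the set $I$ of new incidences consists of $\binom{2n-2}{n-1}$ point-line pairs whose points belong to $\mathcal C_2$ and whose lines belong to $\mathcal C_1$; (4) $\mathcal C_1$ and $\mathcal C_2$ are dual to each other; (5) $\mathcal C_1$ and $\mathcal C_2$ are flag-transitive.
   Context: $\mathit{DCD}(n)$: the combinatorial configuration whose points are the $n$-subsets and whose lines are the $(n-1)$-subsets of $\{1,\dots,2n-1\}$, a point being incident with a line iff the line's subset is contained in the point's subset (equivalently, the points and lines cut out by $2n-1$ hyperplanes in general position in projective $n$-space, by $n$ and by $n-1$ of them respectively). A configuration of type $(p_q, b_k)$ is an incidence structure with $p$ points and $b$ lines (blocks), each point incident with exactly $q$ lines and each line with exactly $k$ points. Incidence sum: given configurations $\mathcal C_1,\mathcal C_2$ with point sets $\mathcal P_1,\mathcal P_2$ and line sets $\mathcal L_1,\mathcal L_2$, and a set $I\subseteq \mathcal P_1\times\mathcal L_2\cup\mathcal P_2\times\mathcal L_1$, the incidence sum $\mathcal C_1\oplus_I\mathcal C_2$ is the incidence structure with points $\mathcal P_1\sqcup\mathcal P_2$, lines $\mathcal L_1\sqcup\mathcal L_2$,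 and incidences those of $\mathcal C_1$, those of $\mathcal C_2$, and the pairs in $I$. Two configurations are dual to each other if one is isomorphic to the other with the roles of points and lines interchanged. A configuration is flag-transitive if its automorphism group (incidence-preserving bijections of points and of lines) acts transitively on the set of incident point-line pairs. *)

(* Defs.v *)
From mathcomp Require Import all_boot.
Set Implicit Arguments. Unset Strict Implicit. Unset Printing Implicit Defensive.

Record incstr := IncStr {
  pt : finType;
  ln : finType;
  inc : pt -> ln -> bool
}.

Definition config_type (C : incstr) (p q b k : nat) : Prop :=
  [/\ #|{: pt C}| = p, #|{: ln C}| = b,
      forall x : pt C, #|[set l : ln C | inc x l]| = q
    & forall l : ln C, #|[set x : pt C | inc x l]| = k].

Definition isomorphic (C D : incstr) : Prop :=
  exists (f : pt C -> pt D) (g : ln C -> ln D),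
    [/\ bijective f, bijective g & forall x l, inc (f x) (g l) = inc x l].

Definition dual (C : incstr) : incstr :=
  @IncStr (ln C) (pt C) (fun l x => inc x l).

Definition dual_to (C D : incstr) : Prop := isomorphic C (dual D).

Definition automorphism (C : incstr) (f : pt C -> pt C) (g : ln C -> ln C) : Prop :=
  [/\ bijective f, bijective g & forall x l, inc (f x) (g l) = inc x l].

Definition flag_transitive (C : incstr) : Prop :=
  forall (x x' : pt C) (l l' : ln C), inc x l -> inc x' l' ->
    exists (f : pt C -> pt C) (g : ln C -> ln C), @automorphism C f g /\ f x = x' /\ g l = l'.

(* Possible new incidences of an incidence sum: P1 x L2  ∪  P2 x L1. *)
Definition cross_pairs (C1 C2 : incstr) : finType :=
  ((pt C1 * ln C2) + (pt C2 * ln C1))%type.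

Definition isum_inc (C1 C2 : incstr) (I : {set cross_pairs C1 C2})
  (x : pt C1 + pt C2) (l : ln C1 + ln C2) : bool :=
  match x, l with
  | inl p, inl m => inc p m
  | inr p, inr m => inc p m
  | inl p, inr m => inl (p, m) \in I
  | inr p, inl m => inr (p, m) \in I
  end.

Definition isum (C1 C2 : incstr) (I : {set cross_pairs C1 C2}) : incstr :=
  @IncStr (pt C1 + pt C2)%type (ln C1 + ln C2)%type (isum_inc I).

(* DCD(n): points = n-subsets, lines = (n-1)-subsets of {1..2n-1}
   (modelled as 'I_(2n-1)); a point is on a line iff line ⊆ point. *)
Definition DCD (n : nat) : incstr :=
  @IncStr {A : {set 'I_(2 * n - 1)} | #|A| == n}
          {B : {set 'I_(2 * n - 1)} | #|B| == n.-1}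
          (fun A B => val B \subset val A).

Definition in_P2L1 (C1 C2 : incstr) (c : cross_pairs C1 C2) : bool :=
  if c is inr _ then true else false.

(* Main.v *)
Require Import Defs.
From mathcomp Require Import all_boot all_fingroup.
From mathcomp Require Import zify.
Set Implicit Arguments. Unset Strict Implicit. Unset Printing Implicit Defensive.

Section Gen.
Variable T : finType.

Lemma subval_set (D A : {set T}) : A \subset D ->
  A = [set val x | x in [set x : {x : T | x \in D} | val x \in A]].
Proof.
move=> sAD; apply/setP=> y; apply/idP/imsetP.
  by move=> yA; exists (exist _ y (subsetP sAD y yA)); rewrite ?inE.
by case=> x; rewrite inE => xA ->.
Qed.

Lemma card_sub_k (D : {set T}) k :
  #|[set A : {set T} | (A \subset D) && (#|A| == k)]| = 'C(#|D|, k).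
Proof.
pose S := {x : T | x \in D}.
have -> : [set A : {set T} | (A \subset D) && (#|A| == k)] =
   (fun X : {set S} => [set val x | x in X]) @: [set X : {set S} | #|X| == k].
  apply/setP=> A; rewrite inE; apply/andP/imsetP.
    case=> sAD /eqP cA; exists [set x : S | val x \in A]; last exact: subval_set.
    by rewrite inE -(card_imset _ val_inj) -subval_set // cA.
  case=> X; rewrite inE => /eqP cX ->; split.
    by apply/subsetP=> y /imsetP [x _ ->]; exact: valP.
  by rewrite card_imset ?cX //; exact: val_inj.
rewrite card_imset ?card_draws ?card_sig //; last exact: (imset_inj val_inj).
Qed.

Lemma setUDS (A B : {set T}) : B \subset A -> B :|: (A :\: B) = A.
Proof.
move=> sBA; apply/setP=> x; rewrite !inE; case xB: (x \in B) => //=.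
by rewrite (subsetP sBA).
Qed.

Lemma card_between (B D : {set T}) k : B \subset D -> #|B| <= k ->
  #|[set A : {set T} | [&& B \subset A, A \subset D & #|A| == k]]| =
  'C(#|D :\: B|, k - #|B|).
Proof.
move=> sBD lek.
rewrite -card_sub_k.
have -> : [set A : {set T} | [&& B \subset A, A \subset D & #|A| == k]] =
   (fun X => B :|: X) @: [set X : {set T} | (X \subset D :\: B) && (#|X| == k - #|B|)].
  apply/setP=> A; rewrite inE; apply/and3P/imsetP.
    case=> sBA sAD /eqP cA; exists (A :\: B); last by rewrite setUDS.
    by rewrite inE setSD //= cardsD (setIidPr sBA) cA eqxx.
  case=> X; rewrite inE => /andP [sX /eqP cX] ->.
  have BX0 : B :&: X = set0.
    apply/setP=> x; rewrite !inE; apply/negbTE; apply/negP=> /andP [xB xX].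
    by move: (subsetP sX x xX); rewrite !inE xB.
  split; first exact: subsetUl.
    by rewrite subUset sBD (subset_trans sX) // subsetDl.
  by rewrite cardsU BX0 cards0 subn0 cX subnKC.
apply: card_in_imset => X Y; rewrite !inE => /andP [sX _] /andP [sY _] eXY.
have H : forall Z : {set T}, Z \subset D :\: B -> (B :|: Z) :\: B = Z.
  move=> Z sZ; apply/setP=> x; rewrite !inE.
  case xZ: (x \in Z); first rewrite orbT andbT.
    by move: (subsetP sZ x xZ); rewrite !inE => /andP [-> _].
  by rewrite orbF andNb.
by rewrite -(H _ sX) eXY H.
Qed.
Lemma relabel (c d : T -> nat) :
  (forall k, #|[set x | c x == k]| = #|[set x | d x == k]|) ->
  exists s : {perm T}, forall x, d (s x) = c x.
Proof.
have [m] := ubnP #|[set x | c x != d x]|.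
elim: m d => // m IH d lt H.
case: (set_0Vmem [set x | c x != d x]) => [E0 | [x xM]].
  exists (1%g : {perm T}) => x; rewrite perm1; apply/eqP.
  by move/setP: E0 => /(_ x); rewrite !inE => /negbFE; rewrite eq_sym.
have [y dy cy] : exists2 y, d y == c x & c y != c x.
  case: (boolP ([set z | d z == c x] \subset [set z | c z == c x])).
    move=> sub; have /(_ x) := subset_cardP (esym (H (c x))) sub.
    by rewrite !inE eqxx; move: xM; rewrite inE eq_sym => /negbTE ->.
  by case/subsetPn => y; rewrite !inE => dy cy; exists y.
pose d' := fun z => d (tperm x y z).
have H' : forall k, #|[set z | c z == k]| = #|[set z | d' z == k]|.
  move=> k; rewrite H -(card_preimset _ (@perm_inj _ (tperm x y))).
  by apply: eq_card => z; rewrite !inE.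
have lt' : #|[set z | c z != d' z]| < #|[set z | c z != d z]|.
  apply: proper_card; apply/properP; split.
    apply/subsetP=> z; rewrite !inE /d'.
    case: (tpermP x y z) => [-> | -> | //].
      by rewrite (eqP dy) eqxx.
    by move=> _; rewrite (eqP dy).
  by exists x; rewrite ?inE /d' ?tpermL ?(eqP dy) ?eqxx //; move: xM; rewrite inE.
have [s Hs] := IH d' (leq_trans lt' (ltnSE lt)) H'.
by exists (s * tperm x y)%g => z; rewrite permM; exact: Hs.
Qed.

Variable e : T.
Definition lab (A B : {set T}) z : nat :=
  if z == e then 3 else if z \in B then 0 else if z \in A then 1 else 2.

Lemma lab_classes (A B : {set T}) k : B \subset A -> [set z | lab A B z == k] =
  match k with 0 => B :\ e | 1 => (A :\: B) :\ e | 2 => ~: A :\ e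
  | 3 => [set e] | _ => set0 end.
Proof.
move=> sBA; apply/setP=> z; rewrite /lab; case: k => [|[|[|[|k]]]]; rewrite !inE;
  case: (z == e); case zB: (z \in B); try rewrite (subsetP sBA z zB);
  by case: (z \in A).
Qed.

Lemma cardD1_eq (X Y : {set T}) : #|X| = #|Y| -> (e \in X) = (e \in Y) ->
  #|X :\ e| = #|Y :\ e|.
Proof.
move=> c h; have := cardsD1 e X; have := cardsD1 e Y; rewrite c h.
case: (e \in Y) => /= ->; lia.
Qed.

Lemma lab_card (A B A' B' : {set T}) k : B \subset A -> B' \subset A' ->
  #|A| = #|A'| -> #|B| = #|B'| -> (e \in A) = (e \in A') -> (e \in B) = (e \in B') ->
  #|[set z | lab A B z == k]| = #|[set z | lab A' B' z == k]|.
Proof.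
move=> sBA sBA' cA cB eA eB; rewrite !lab_classes //; case: k => [|[|[|[|k]]]] //.
- exact: cardD1_eq.
- apply: cardD1_eq; last by rewrite !inE eA eB.
  by rewrite !cardsD (setIidPr sBA) (setIidPr sBA') cA cB.
- apply: cardD1_eq; last by rewrite !inE eA.
  by apply/eqP; rewrite -(eqn_add2l #|A|) cardsC cA cardsC.
Qed.

Lemma flag_perm (A B A' B' : {set T}) : B \subset A -> B' \subset A' ->
  #|A| = #|A'| -> #|B| = #|B'| -> (e \in A) = (e \in A') -> (e \in B) = (e \in B') ->
  exists s : {perm T}, [/\ s e = e, s @: A = A' & s @: B = B'].
Proof.
move=> sBA sBA' cA cB eA eB.
have [s Hs] := @relabel (lab A B) (lab A' B')
  (fun k => lab_card k sBA sBA' cA cB eA eB).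
have se : s e = e.
  have := Hs e; rewrite {2}/lab eqxx /lab.
  by case: eqP => // _; case: ifP => //; case: ifP.
have sne : forall z, z != e -> s z != e.
  by move=> z; apply: contraNN => /eqP; rewrite -{1}se => /perm_inj ->.
have HB : forall z, z \in B -> s z \in B'.
  move=> z zB; case ze: (z == e); first by rewrite (eqP ze) se -eB -(eqP ze).
  have := Hs z; rewrite /lab ze zB (negbTE (sne _ (negbT ze))).
  by case: ifP => // _; case: ifP.
have HA : forall z, z \in A -> s z \in A'.
  move=> z zA; case ze: (z == e); first by rewrite (eqP ze) se -eA -(eqP ze).
  have := Hs z; rewrite /lab ze zA (negbTE (sne _ (negbT ze))).
  case: ifP => [/(subsetP sBA') // | _]; case: ifP => // _.
  by case: ifP.
exists s; split => //; apply/eqP; rewrite eqEcard (card_imset _ perm_inj).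
- rewrite cA leqnn andbT.
  by apply/subsetP=> y /imsetP [z zA ->]; exact: HA.
- rewrite cB leqnn andbT.
  by apply/subsetP=> y /imsetP [z zA ->]; exact: HB.
Qed.

Definition Dpt (m : nat) (b : bool) := {A : {set T} | (#|A| == m) && ((e \in A) == b)}.
Definition Dcf (n : nat) (b : bool) : incstr :=
  @IncStr (Dpt n b) (Dpt n.-1 b) (fun A B => val B \subset val A).

Lemma imset_perm_subset (s : {perm T}) (A B : {set T}) :
  (s @: B \subset s @: A) = (B \subset A).
Proof.
apply/idP/idP; last exact: imsetS.
move=> h; apply/subsetP=> x xB.
by have := subsetP h _ (imset_f s xB); rewrite mem_imset //; exact: perm_inj.
Qed.

Lemma act_proof (s : {perm T}) (se : s e = e) m b (X : {set T}) :
  (#|X| == m) && ((e \in X) == b) -> (#|s @: X| == m) && ((e \in s @: X) == b).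
Proof. by rewrite (card_imset _ perm_inj) -{2}se mem_imset //; exact: perm_inj. Qed.

Definition act_pt (s : {perm T}) (se : s e = e) m b (X : Dpt m b) : Dpt m b :=
  exist _ (s @: val X) (act_proof se (valP X)).

Lemma permV_e (s : {perm T}) : s e = e -> s^-1%g e = e.
Proof. by move=> se; rewrite -{1}se permK. Qed.

Lemma act_bij (s : {perm T}) (se : s e = e) m b : bijective (@act_pt s se m b).
Proof.
exists (@act_pt _ (permV_e se) m b) => X; apply: val_inj => /=;
  rewrite -imset_comp (eq_imset _ (_ : _ =1 id)) ?imset_id // => x /=.
  exact: permK.
exact: permKV.
Qed.

Lemma Dflag n b : flag_transitive (Dcf n b).
Proof.
move=> x x' l l' /= hxl hxl'.
have /andP [/eqP cx /eqP ex] := valP x.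
have /andP [/eqP cx' /eqP ex'] := valP x'.
have /andP [/eqP cl /eqP el] := valP l.
have /andP [/eqP cl' /eqP el'] := valP l'.
have [s [se sA sB]] := flag_perm hxl hxl' (etrans cx (esym cx')) (etrans cl (esym cl'))
  (etrans ex (esym ex')) (etrans el (esym el')).
exists (@act_pt s se n b), (@act_pt s se n.-1 b); split; last first.
  by split; apply: val_inj.
split; try exact: act_bij.
by move=> X L /=; rewrite imset_perm_subset.
Qed.

Lemma card_sigset (P Q : pred {set T}) :
  #|[set l : {A : {set T} | P A} | Q (val l)]| = #|[set A | P A && Q A]|.
Proof.
rewrite -(card_imset _ val_inj); apply: eq_card => A.
rewrite [in RHS]inE; apply/imsetP/andP.
  by case=> l; rewrite inE => ql ->; split => //; exact: valP.
by case=> pA qA; exists (exist _ A pA); rewrite ?inE.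
Qed.

Lemma subsetC1 (A : {set T}) : (A \subset [set~ e]) = (e \notin A).
Proof.
apply/subsetP/idP.
  by move=> h; apply/negP=> eA; have := h e eA; rewrite !inE eqxx.
by move=> ne x xA; rewrite !inE; apply/eqP=> xe; rewrite -xe xA in ne.
Qed.

Lemma card_D m b : 0 < m ->
  #|[set A : {set T} | (#|A| == m) && ((e \in A) == b)]| =
  'C(#|T|.-1, if b then m.-1 else m).
Proof.
move=> m0; case: b.
  have -> : [set A : {set T} | (#|A| == m) && ((e \in A) == true)] =
            [set A : {set T} | [&& [set e] \subset A, A \subset setT & #|A| == m]].
    by apply/setP=> A; rewrite !inE sub1set subsetT eqb_id andbC.
  by rewrite card_between ?subsetT ?cards1 // setTD cardsC1 subn1.
have -> : [set A : {set T} | (#|A| == m) && ((e \in A) == false)] =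
          [set A : {set T} | [&& set0 \subset A, A \subset [set~ e] & #|A| == m]].
  by apply/setP=> A; rewrite !inE sub0set subsetC1 eqbF_neg andbC.
by rewrite card_between ?sub0set ?cards0 // setD0 cardsC1 subn0.
Qed.

Lemma deg_pt n b (A : {set T}) : 1 < n -> #|A| = n -> (e \in A) = b ->
  #|[set B : {set T} | ((#|B| == n.-1) && ((e \in B) == b)) && (B \subset A)]| =
  if b then n.-1 else n.
Proof.
case: n => [|[|k]] // _ cA eA; case: b eA => eA.
  have -> : [set B : {set T} | ((#|B| == k.+1) && ((e \in B) == true)) && (B \subset A)] =
            [set B : {set T} | [&& [set e] \subset B, B \subset A & #|B| == k.+1]].
    apply/setP=> B; rewrite !inE sub1set eqb_id.
    by case: (e \in B); case: (B \subset A); case: (#|B| == _).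
  rewrite card_between ?sub1set ?cards1 //.
  have := cardsD1 e A; rewrite eA cA add1n => -[<-].
  by rewrite subn1 binSn.
have -> : [set B : {set T} | ((#|B| == k.+1) && ((e \in B) == false)) && (B \subset A)] =
          [set B : {set T} | [&& set0 \subset B, B \subset A & #|B| == k.+1]].
  apply/setP=> B; rewrite !inE sub0set; case sBA: (B \subset A); rewrite ?andbF //=.
  have -> : (e \in B) = false by apply/negbTE/negP => /(subsetP sBA); rewrite eA.
  by rewrite andbT; case: (#|B| == _).
by rewrite (@card_between set0 A) ?sub0set ?cards0 // setD0 cA subn0 binSn.
Qed.

Lemma deg_ln n b (B : {set T}) : 1 < n -> #|T| = 2 * n - 1 -> #|B| = n.-1 ->
  (e \in B) = b ->
  #|[set A : {set T} | ((#|A| == n) && ((e \in A) == b)) && (B \subset A)]| =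
  if b then n else n.-1.
Proof.
move=> n1 cT cB; case: b => eB.
  have -> : [set A : {set T} | ((#|A| == n) && ((e \in A) == true)) && (B \subset A)] =
            [set A : {set T} | [&& B \subset A, A \subset setT & #|A| == n]].
    apply/setP=> A; rewrite !inE subsetT eqb_id; case sBA: (B \subset A); rewrite ?andbF //=.
    by rewrite (subsetP sBA _ eB) !andbT.
  rewrite (@card_between B setT) ?subsetT ?cB; try (by []); try (by lia).
  have -> : n - n.-1 = 1 by lia.
  rewrite setTD bin1.
  have := cardsC B; rewrite cT cB; lia.
have -> : [set A : {set T} | ((#|A| == n) && ((e \in A) == false)) && (B \subset A)] =
          [set A : {set T} | [&& B \subset A, A \subset [set~ e] & #|A| == n]].
  apply/setP=> A; rewrite !inE subsetC1 eqbF_neg.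
  by case: (e \in A); case: (B \subset A); case: (#|A| == _).
have sB : B \subset [set~ e] by rewrite subsetC1 eB.
rewrite (@card_between B [set~ e]) ?cB //; try (by []); try (by lia).
have -> : n - n.-1 = 1 by lia.
rewrite bin1 cardsD (setIidPr sB) cardsC1 cT cB; lia.
Qed.

Lemma card_Dpt m b : 0 < m -> #|{: Dpt m b}| = 'C(#|T|.-1, if b then m.-1 else m).
Proof. by move=> m0; rewrite card_sig -card_D //; apply: eq_card => A; rewrite !inE. Qed.

Lemma Dconfig n b : 1 < n -> #|T| = 2 * n - 1 ->
  config_type (Dcf n b) #|{: Dpt n b}| (if b then n.-1 else n)
                        #|{: Dpt n.-1 b}| (if b then n else n.-1).
Proof.
move=> n1 cT; split => //.
  move=> x /=; rewrite (@card_sigset (fun B => (#|B| == n.-1) && ((e \in B) == b))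
                        (fun B => B \subset val x)).
  by have /andP [/eqP cx /eqP ex] := valP x; rewrite deg_pt.
move=> l /=; rewrite (@card_sigset (fun A => (#|A| == n) && ((e \in A) == b))
                        (fun A => val l \subset A)).
by have /andP [/eqP cl /eqP el] := valP l; rewrite deg_ln.
Qed.

Lemma compl_proof m m' b (X : {set T}) : #|T| = m + m' ->
  (#|X| == m) && ((e \in X) == b) -> (#|~: X| == m') && ((e \in ~: X) == ~~ b).
Proof.
move=> cT /andP [/eqP cX /eqP eX]; rewrite inE eX eqxx andbT.
by have := cardsC X; rewrite cT cX => /eqP; rewrite eqn_add2l.
Qed.

Definition compl_pt m m' b (h : #|T| = m + m') (X : Dpt m b) : Dpt m' (~~ b) :=
  exist _ (~: val X) (compl_proof h (valP X)).

Lemma compl_inj m m' b (h : #|T| = m + m') : injective (@compl_pt m m' b h).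
Proof. by move=> X Y [] /setC_inj /val_inj. Qed.

Lemma forget_proof m b (X : {set T}) : (#|X| == m) && ((e \in X) == b) -> #|X| == m.
Proof. by case/andP. Qed.

Definition forget m b (X : Dpt m b) : {A : {set T} | #|A| == m} :=
  exist _ (val X) (forget_proof (valP X)).

Definition gm m (x : (Dpt m false + Dpt m true)%type) : {A : {set T} | #|A| == m} :=
  match x with inl a => forget a | inr a => forget a end.

Lemma gm_inj m : injective (@gm m).
Proof.
move=> [a|a] [c|c] /(congr1 val) /= h.
- by congr inl; exact: val_inj.
- exfalso; case: a h => [A pA]; case: c => [C pC] /= h.
  by move: pA pC; rewrite h => /andP [_ /eqP ->] /andP [_ /eqP].
- exfalso; case: a h => [A pA]; case: c => [C pC] /= h.
  by move: pA pC; rewrite h => /andP [_ /eqP ->] /andP [_ /eqP].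
- by congr inr; exact: val_inj.
Qed.

Lemma gm_card m : 0 < m -> 0 < #|T| ->
  #|{: {A : {set T} | #|A| == m}}| <= #|{: (Dpt m false + Dpt m true)%type}|.
Proof.
move=> m0 T0; rewrite card_sum !card_Dpt // card_sig.
rewrite (eq_card (B := [set A : {set T} | #|A| == m])); last by move=> A; rewrite !inE.
rewrite card_draws.
have -> : #|T| = (#|T|.-1).+1 by lia.
by case: m m0 => // k _; rewrite binS /= addnC.
Qed.

Definition Iset n : {set cross_pairs (Dcf n false) (Dcf n true)} :=
  [set c : cross_pairs (Dcf n false) (Dcf n true) | if c is inr (p, m) then val m \subset val p else false].

Lemma iso_gen n : 1 < n -> 0 < #|T| ->
  isomorphic (@IncStr {A : {set T} | #|A| == n} {B : {set T} | #|B| == n.-1}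
                      (fun A B => val B \subset val A)) (isum (Iset n)).
Proof.
move=> n1 T0.
have [fp gpK fpK] := inj_card_bij (@gm_inj n) (gm_card (ltnW n1) T0).
have n0 : 0 < n.-1 by lia.
have [fl glK flK] := inj_card_bij (@gm_inj n.-1) (gm_card n0 T0).
exists fp, fl; split; [by exists (@gm n) | by exists (@gm n.-1) | ].
move=> x l /=; rewrite -{2}(fpK x) -{2}(flK l).
case: (fp x) => [p|p]; case: (fl l) => [q|q] //=; rewrite inE //.
apply/esym/negbTE/negP => sub.
have /andP [_ /eqP eq] := valP q.
have /andP [_ /eqP ep] := valP p.
by have := subsetP sub e eq; rewrite ep.
Qed.

Lemma Iset_P2L1 n c : c \in Iset n -> in_P2L1 c.
Proof. by case: c => [[p m]|[p m]]; rewrite inE. Qed.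

Lemma cut_proof n (X : {set T}) : (#|X| == n) && ((e \in X) == true) ->
  (#|X :\ e| == n.-1) && ((e \in X :\ e) == false).
Proof.
move/andP => [/eqP cX /eqP eX]; rewrite !inE eqxx /= andbT.
by have := cardsD1 e X; rewrite eX cX add1n => ->.
Qed.

Definition cut n (p : Dpt n true) : Dpt n.-1 false :=
  exist _ (val p :\ e) (cut_proof (valP p)).

Lemma Iset_card n : #|Iset n| = #|{: Dpt n true}|.
Proof.
have -> : Iset n = [set (inr (p, cut p) : cross_pairs (Dcf n false) (Dcf n true)) | p in setT].
  apply/setP=> c; rewrite inE; case: c => [[p m]|[p m]].
    by apply/esym/imsetP => -[q _].
  apply/idP/imsetP.
    move=> sub; exists p => //; congr (inr (_, _)); apply: val_inj => /=.
    have /andP [/eqP cm /eqP em] := valP m.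
    have /andP [/eqP cp /eqP ep] := valP p.
    apply/eqP; rewrite eqEcard subsetD1 sub em /= cm.
    by have := cardsD1 e (val p); rewrite ep cp => h; rewrite [X in _ <= X.-1]h; exact: leqnn.
  by case=> q _ [-> ->] /=; exact: subsetDl.
by rewrite card_imset ?cardsT // => p q [].
Qed.

Lemma dual_gen n : 1 < n -> #|T| = 2 * n - 1 -> dual_to (Dcf n false) (Dcf n true).
Proof.
move=> n1 cT.
have h1 : #|T| = n + n.-1 by lia.
have h2 : #|T| = n.-1 + n by lia.
have n0 : 0 < n.-1 by lia.
exists (@compl_pt n n.-1 false h1), (@compl_pt n.-1 n false h2); split.
- apply: inj_card_bij; first exact: compl_inj.
  rewrite !card_Dpt //= ?(ltnW n1) // cT.
  have -> : (2 * n - 1).-1 = 2 * n - 2 by lia.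
  have h : n.-1.-1 <= 2 * n - 2 by lia.
  rewrite -(bin_sub h); have -> : 2 * n - 2 - n.-1.-1 = n by lia.
  exact: leqnn.
- apply: inj_card_bij; first exact: compl_inj.
  by rewrite !card_Dpt //= ?(ltnW n1).
- by move=> x l /=; rewrite setCS.
Qed.
End Gen.

Theorem theorem4p1 (n : nat) : 3 <= n ->
  exists (C1 C2 : incstr) (I : {set cross_pairs C1 C2}),
    [/\ isomorphic (DCD n) (isum I),
        config_type C1 'C(2 * n - 2, n - 2) n 'C(2 * n - 2, n - 1) (n - 1),
        config_type C2 'C(2 * n - 2, n - 1) (n - 1) 'C(2 * n - 2, n - 2) n,
        (forall c, c \in I -> @in_P2L1 C1 C2 c) /\ #|I| = 'C(2 * n - 2, n - 1)
      & [/\ dual_to C1 C2, flag_transitive C1 & flag_transitive C2]].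
Proof.
move=> n3.
have N0 : 0 < 2 * n - 1 by lia.
pose e : 'I_(2 * n - 1) := Ordinal N0.
have cT : #|'I_(2 * n - 1)| = 2 * n - 1 by rewrite card_ord.
have n1 : 1 < n by lia.
have n0 : 0 < n.-1 by lia.
have eN : (#|'I_(2 * n - 1)|).-1 = 2 * n - 2 by rewrite cT; lia.
have b1 : 'C(2 * n - 2, n) = 'C(2 * n - 2, n.-1.-1).
  have h : n.-1.-1 <= 2 * n - 2 by lia.
  by rewrite -(bin_sub h); congr 'C(_, _); lia.
have -> : n - 1 = n.-1 by lia.
have -> : n - 2 = n.-1.-1 by lia.
exists (Dcf e n false), (Dcf e n true), (Iset e n); split.
- by apply: iso_gen => //; rewrite cT.
- have H := Dconfig e false n1 cT.
  by rewrite !card_Dpt ?(ltnW n1) //= eN b1 in H.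
- have H := Dconfig e true n1 cT.
  by rewrite !card_Dpt ?(ltnW n1) //= eN in H.
- split; first exact: Iset_P2L1.
  by rewrite Iset_card card_Dpt ?(ltnW n1) //= eN.
- split; [exact: dual_gen | exact: Dflag | exact: Dflag].
Qed.
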